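(* In the roundabout exploration process described in the context, for every $t\in[N]$, \[\sum_{a_i\in A(t)}|D_i(t)|\le 2N-|A(t)|.\]
   Context: Let $n\ge 2$ and $k$ be natural numbers, $T$ a tree on an $n$-element vertex set $V$, and $N=2(n-1)$. Fix a root $r$ and a DFS tour of $T$ starting and ending at $r$ that traverses each edge of $T$ exactly twice, giving a cyclic vertex sequence $(v_1,\dots,v_N,v_{N+1})$ with $v_{N+1}=v_1=r$, and tour edges $e_i=\{v_i,v_{i+1}\}$ for $i\in[N]$. For $i,j\in[N]$ the circular interval $[\![i,j]\!]$ is $\{i,i+1,\dots,j\}$ if $i\le j$ and $\{i,\dots,N,1,\dots,j\}$ if $i>j$. Let $\langle G_1,\dots,G_N\rangle$ be graphs on $V$, each containing all but at most $k$ edges of $T$. Roundabout exploration process: agents $a_1,\dots,a_N$ with initial states $s_i(0)=i$. For steps $t=1,\dots,N$: (Movement) for every $i\in[N]$, if $s_i(t-1)=q$ then $s_i(t)=(q\bmod N)+1$ if $e_q\in E(G_t)$, and $s_i(t)=q$ otherwise. Let $D_i(t)=[\![i,s_i(t)]\!]$ and $D_i(0)=\{i\}$. (Elimination) $A(0)=\{a_1,\dots,a_N\}$; $A(t)$ is obtained from $A(t-1)$ by repeatedly removing an arbitrary agent $a_i$ of the current set with $D_i(t)\subseteq\bigcup D_j(t)$ over the other agents $a_j$ of the current set, until no such agent remains. *)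

(* Defs.v *)
From mathcomp Require Import all_boot.
Set Implicit Arguments. Unset Strict Implicit. Unset Printing Implicit Defensive.

Definition is_graph (V : finType) (E : {set {set V}}) : Prop :=
  forall e, e \in E -> #|e| = 2.

Definition gadj (V : finType) (E : {set {set V}}) : rel V :=
  fun x y => [set x; y] \in E.

Definition is_tree (V : finType) (T : {set {set V}}) : Prop :=
  [/\ is_graph T,
      (forall x y, connect (gadj T) x y) &
      (forall c : seq V, uniq c -> 3 <= size c -> ~~ cycle (gadj T) c)].

(* The (0-based) vertex sequence v 0, ..., v N of a closed tour starting and
   ending at r, traversing each edge of T exactly twice
   (tour edge q is {v q, v q.+1}, q < N). *)
Definition dfs_tour (V : finType) (T : {set {set V}}) (N : nat) (r : V)
    (v : nat -> V) : Prop :=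
  [/\ v 0 = r, v N = r,
      (forall q, q < N -> [set v q; v q.+1] \in T) &
      (forall e, e \in T -> #|[set q : 'I_N | [set v q; v q.+1] == e]| = 2)].

Definition cint (N : nat) (i j : 'I_N) : {set 'I_N} :=
  [set q : 'I_N | if i <= j then (i <= q) && (q <= j) else (i <= q) || (q <= j)].

Fixpoint state (V : finType) (N : nat) (v : nat -> V) (G : nat -> {set {set V}})
    (t : nat) (i : 'I_N) : 'I_N :=
  match t with
  | 0 => i
  | t'.+1 => let q := state v G t' i in
             if [set v q; v q.+1] \in G t'.+1 then ordS q else q
  end.

Definition Dset (V : finType) (N : nat) (v : nat -> V) (G : nat -> {set {set V}})
    (t : nat) (i : 'I_N) : {set 'I_N} :=
  cint i (state v G t i).

Definition redundant (V : finType) (N : nat) (v : nat -> V)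
    (G : nat -> {set {set V}}) (t : nat) (A : {set 'I_N}) (i : 'I_N) : bool :=
  (i \in A) && (Dset v G t i \subset \bigcup_(j in A :\ i) Dset v G t j).

Inductive elim_reach (N : nat) (P : {set 'I_N} -> 'I_N -> bool) :
    {set 'I_N} -> {set 'I_N} -> Prop :=
  | er_refl A : elim_reach P A A
  | er_step A i B : P A i -> elim_reach P (A :\ i) B -> elim_reach P A B.

Definition elim_history (V : finType) (N : nat) (v : nat -> V)
    (G : nat -> {set {set V}}) (A : nat -> {set 'I_N}) : Prop :=
  A 0 = setT /\
  (forall t, 1 <= t <= N ->
     elim_reach (redundant v G t) (A t.-1) (A t) /\
     (forall i, ~~ redundant v G t (A t) i)).

(* Main.v *)
Require Import Defs.
From mathcomp Require Import all_boot zify.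
Set Implicit Arguments. Unset Strict Implicit.

Section S.
Variable N : nat.
Definition dl (q x : nat) := if x <= q then q - x else q + N - x.
Definition dr (q x : nat) := if q <= x then x - q else x + N - q.

Lemma cintE (i j x : 'I_N) : (x \in cint i j) = (if i <= j then (i <= x) && (x <= j) else (i <= x) || (x <= j)).
Proof. by rewrite inE. Qed.

Lemma arc_char (x : 'I_N) (i j q : 'I_N) : q \in cint i j ->
  (x \in cint i j) = ((dl q x <= dl q i) || (dr q x <= dr q j)).
Proof.
rewrite !cintE /dl /dr.
have := ltn_ord i; have := ltn_ord j; have := ltn_ord q; have := ltn_ord x.
move: (nat_of_ord i) (nat_of_ord j) (nat_of_ord q) (nat_of_ord x) => a b c d.
move=> h1 h2 h3 h4; repeat case: ifP => ?; move=> H; apply/idP/idP; lia.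
Qed.

Lemma pick3 la lb lc ra rb rc :
 (forall d1 d2, d1 <= la \/ d2 <= ra -> (d1 <= lb \/ d2 <= rb) \/ (d1 <= lc \/ d2 <= rc)) \/
 (forall d1 d2, d1 <= lb \/ d2 <= rb -> (d1 <= la \/ d2 <= ra) \/ (d1 <= lc \/ d2 <= rc)) \/
 (forall d1 d2, d1 <= lc \/ d2 <= rc -> (d1 <= la \/ d2 <= ra) \/ (d1 <= lb \/ d2 <= rb)).
Proof.
have [?|?] := leqP la lb; have [?|?] := leqP lb lc; have [?|?] := leqP la lc;
have [?|?] := leqP ra rb; have [?|?] := leqP rb rc; have [?|?] := leqP ra rc;
first [left; move=> d1 d2; lia | right; left; move=> d1 d2; lia | right; right; move=> d1 d2; lia].
Qed.

End S.
Section Main.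
Variable N : nat.
Variable A : {set 'I_N}.
Variable s : 'I_N -> 'I_N.
Let D i := cint i (s i).
Let U i := \bigcup_(j in A :\ i) D j.
Hypothesis nonred : forall i, i \in A -> ~~ (D i \subset U i).

Lemma covered (a b c : 'I_N) (q : 'I_N) : a \in A -> b \in A -> c \in A ->
  b != a -> c != a -> q \in D a -> q \in D b -> q \in D c ->
  (forall d1 d2, d1 <= dl N q a \/ d2 <= dr N q (s a) ->
     (d1 <= dl N q b \/ d2 <= dr N q (s b)) \/ (d1 <= dl N q c \/ d2 <= dr N q (s c))) -> False.
Proof.
move=> Aa Ab Ac ba ca qa qb qc H.
move/negP: (nonred Aa); apply; apply/subsetP => x.
rewrite /D (arc_char x qa) => /orP hx.
have [h|h] : (x \in D b) \/ (x \in D c).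
  rewrite /D (arc_char x qb) (arc_char x qc).
  case: (H (dl N q x) (dr N q x)).
    by case: hx => ->; [left|right].
  by case=> ->; left; rewrite ?orbT.
  by case=> ->; right; rewrite ?orbT.
by apply/bigcupP; exists b => //; rewrite !inE ba.
by apply/bigcupP; exists c => //; rewrite !inE ca.
Qed.

Definition cnt q := #|[set i in A | q \in D i]|.

Lemma cnt_le2 q : cnt q <= 2.
Proof.
rewrite /cnt; set S := [set i in A | q \in D i].
rewrite leqNgt; apply/negP => H.
have /card_gt0P [a aS] : 0 < #|S| by lia.
have := cardsD1 a S; rewrite aS => E1.
have /card_gt0P [b bS] : 0 < #|S :\ a| by lia.
have := cardsD1 b (S :\ a); rewrite bS => E2.
have /card_gt0P [c cS] : 0 < #|S :\ a :\ b| by lia.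
move: aS bS cS; rewrite !in_setD1 => /setIdP [Aa qa] /andP [ba /setIdP [Ab qb]] /and3P [cb ca /setIdP [Ac qc]].
have [H1|[H2|H3]] := pick3 (dl N q a) (dl N q b) (dl N q c) (dr N q (s a)) (dr N q (s b)) (dr N q (s c)).
- have := (covered Aa Ab Ac ba ca qa qb qc H1). done.
- apply: (covered Ab Aa Ac _ _ qb qa qc H2); by rewrite // eq_sym.
- apply: (covered Ac Aa Ab _ _ qc qa qb H3); by rewrite // eq_sym.
Qed.

Definition p i := odflt i [pick q in D i :\: U i].

Lemma pP i : i \in A -> (p i \in D i) && (p i \notin U i).
Proof.
move=> Ai; rewrite /p; case: pickP => [q|] /=; first by rewrite in_setD andbC.
move=> H; move: (nonred Ai); case/subsetPn => x xD xU.
by move: (H x); rewrite in_setD xD xU.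
Qed.

Lemma cnt_p i : i \in A -> cnt (p i) <= 1.
Proof.
move=> Ai; rewrite /cnt -(cards1 i); apply: subset_leq_card; apply/subsetP => j.
rewrite in_set1 => /setIdP [Aj pj]; apply/negPn/negP => ji.
case/andP: (pP Ai) => _ /bigcupP; apply; exists j => //; by rewrite in_setD1 ji.
Qed.

Lemma cardA_le : #|A| <= #|[set q | cnt q <= 1]|.
Proof.
have <- : #|p @: A| = #|A|.
  apply: card_in_imset => i j Ai Aj pij; apply/eqP; apply/negP => /negP ij.
  case/andP: (pP Ai) => _ /bigcupP; apply; exists j; first by rewrite !inE eq_sym ij.
  by rewrite pij; case/andP: (pP Aj).
apply: subset_leq_card; apply/subsetP => x /imsetP [i Ai ->]; by rewrite inE cnt_p.
Qed.

Lemma sum_cnt : \sum_(i in A) #|D i| = \sum_q cnt q.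
Proof.
have E : forall i, #|D i| = \sum_q (q \in D i : nat).
  by move=> i; rewrite -sum1_card big_mkcond.
under eq_bigr => i _ do rewrite E.
rewrite exchange_big; apply: eq_bigr => q _.
rewrite /cnt -sum1_card big_mkcond /= [RHS]big_mkcond /=; apply: eq_bigr => i _.
by rewrite !inE; case: (i \in A); case: (q \in D i).
Qed.

Lemma main_gen : \sum_(i in A) #|D i| <= 2 * N - #|A|.
Proof.
rewrite sum_cnt.
have H := cardA_le.
have HQ : #|[set q | cnt q <= 1]| = \sum_q (if q \in [set q | cnt q <= 1] then 1 else 0).
  by rewrite -sum1_card big_mkcond.
suff : \sum_q cnt q + \sum_q (if q \in [set q | cnt q <= 1] then 1 else 0) <= 2 * N by lia.
rewrite -big_split /=.
have -> : 2 * N = \sum_(q : 'I_N) 2 by rewrite sum_nat_const card_ord mulnC.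
apply: leq_sum => q _; rewrite inE; have := cnt_le2 q; case: (leqP (cnt q) 1) => *; lia.
Qed.
End Main.

Theorem lemma7 (V : finType) (n k : nat) (T : {set {set V}}) (r : V)
    (v : nat -> V) (G : nat -> {set {set V}}) (A : nat -> {set 'I_(2 * (n - 1))}) :
  2 <= n -> #|V| = n -> is_tree T -> dfs_tour T (2 * (n - 1)) r v ->
  (forall t, 1 <= t <= 2 * (n - 1) -> is_graph (G t) /\ #|T :\: G t| <= k) ->
  elim_history v G A ->
  forall t, 1 <= t <= 2 * (n - 1) ->
    \sum_(i in A t) #|Dset v G t i| <= 2 * (2 * (n - 1)) - #|A t|.
Proof.
move=> _ _ _ _ _ [_ HA] t Ht.
have [_ Hn] := HA t Ht.
apply: (main_gen (s := state v G t)) => i Ai.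
by move: (Hn i); rewrite /redundant Ai.
Qed.
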